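(* Let $X$ be a non-empty finite set and $\mathcal{P}$ a partition of $X$ whose distinct block sizes are $l_1<l_2<\cdots<l_r$. Suppose $U\subseteq\Sigma(X,\mathcal{P})$ is such that $S(X,\mathcal{P})\cup U$ generates $\Sigma(X,\mathcal{P})$ as a semigroup, and let $i\in\{1,\ldots,r\}$ be such that either $i=1$ and $l_1\ne 1$, or $i\ge 2$ and $l_i-l_{i-1}\ge 2$. Then $\mathcal{C}_i\cap U\ne\emptyset$.
   Context: $T(X,\mathcal{P})$ is the semigroup (under composition) of maps $f:X\to X$ mapping each block of $\mathcal{P}$ into some block; $S(X,\mathcal{P})$ is its group of units (bijections in $T(X,\mathcal{P})$); $\Sigma(X,\mathcal{P})$ is the set of $f\in T(X,\mathcal{P})$ whose image intersects every block. For $i\le r$, $\mathcal{C}_i$ is the set of all $f\in\Sigma(X,\mathcal{P})$ such that $f$ maps each block into a block of the same size (possibly itself), there is one block of size $l_i$ whose image under $f$ has size $l_i-1$, and $f$ maps all other blocks injectively. *)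

(* Defs.v *)
From mathcomp Require Import all_boot.
Set Implicit Arguments. Unset Strict Implicit. Unset Printing Implicit Defensive.

Section PartSemigroups.
Variable T : finType.
Variable P : {set {set T}}.

Definition fcomp (f g : {ffun T -> T}) : {ffun T -> T} := [ffun x => f (g x)].

Definition inT (f : {ffun T -> T}) : Prop :=
  forall B, B \in P -> exists2 B', B' \in P & f @: B \subset B'.

Definition inS (f : {ffun T -> T}) : Prop := inT f /\ bijective f.

Definition inSigma (f : {ffun T -> T}) : Prop :=
  inT f /\ forall B, B \in P -> (f @: [set: T]) :&: B != set0.

Inductive gen (A : {ffun T -> T} -> Prop) : {ffun T -> T} -> Prop :=
| gen_base f : A f -> gen A f
| gen_comp f g : gen A f -> gen A g -> gen A (fcomp f g).

(* distinct block sizes in increasing order: l_1 < ... < l_r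
   (0-indexed: nth 0 block_sizes k = l_(k+1)) *)
Definition block_sizes : seq nat := sort leq (undup [seq #|pred_of_set B| | B <- enum P]).

(* C_(k+1), for a 0-based index k *)
Definition inC (k : nat) (f : {ffun T -> T}) : Prop :=
  [/\ inSigma f,
      (forall B, B \in P -> exists2 B', B' \in P & (#|B'| = #|B|) /\ f @: B \subset B') &
      exists2 B0, B0 \in P &
        [/\ #|B0| = nth 0 block_sizes k,
            #|f @: B0| = (nth 0 block_sizes k).-1 &
            forall B, B \in P -> B != B0 -> {in B &, injective f}]].

End PartSemigroups.

(* Main.v *)
Require Import Defs.
From mathcomp Require Import all_boot.
From mathcomp Require Import zify.

Lemma same_block (T : finType) (P : {set {set T}}) (B B' : {set T}) x :
  partition P [set: T] -> B \in P -> B' \in P -> x \in B -> x \in B' -> B = B'.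
Proof.
move=> /and3P [_ tI _] HB HB' xB xB'.
by rewrite -(def_pblock tI HB xB) (def_pblock tI HB' xB').
Qed.

Lemma block_of (T : finType) (P : {set {set T}}) x :
  partition P [set: T] -> pblock P x \in P /\ x \in pblock P x.
Proof.
move=> /and3P [/eqP cP _ _].
by rewrite pblock_mem ?mem_pblock cP ?inE.
Qed.

Lemma nonempty_block (T : finType) (P : {set {set T}}) B :
  partition P [set: T] -> B \in P -> exists x, x \in B.
Proof.
move=> /and3P [_ _ n0] HB.
have : B != set0 by apply: contraNneq n0 => <-.
by case/set0Pn => x; exists x.
Qed.

Lemma inT_comp (T : finType) (P : {set {set T}}) (h1 h2 : {ffun T -> T}) :
  inT P h1 -> inT P h2 -> inT P (fcomp h1 h2).
Proof.
move=> H1 H2 B HB.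
have [B1 HB1 s1] := H2 B HB.
have [B2 HB2 s2] := H1 B1 HB1.
exists B2 => //.
apply/subsetP => _ /imsetP [x xB ->]; rewrite ffunE.
apply: (subsetP s2); apply: imset_f; apply: (subsetP s1); exact: imset_f.
Qed.

Lemma sum_eq_le (I : finType) (A : {set I}) (a b : I -> nat) :
  {in A, forall i, a i <= b i} -> \sum_(i in A) a i = \sum_(i in A) b i ->
  {in A, forall i, a i = b i}.
Proof.
move=> le eq i iA; apply/eqP; rewrite eqn_leq le //=.
rewrite leqNgt; apply/negP => lt.
move: eq; rewrite (bigD1 i iA) [in RHS](bigD1 i iA) /= => eq.
suff : a i + \sum_(j | (j \in A) && (j != i)) a j < b i + \sum_(j | (j \in A) && (j != i)) b j.
  by rewrite eq ltnn.
apply: (@leq_trans (b i + \sum_(j | (j \in A) && (j != i)) a j)); first by rewrite ltn_add2r.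
by rewrite leq_add2l; apply: leq_sum => j /andP [jA _]; apply: le.
Qed.

Lemma blockmap (T : finType) (P : {set {set T}}) (h : {ffun T -> T}) :
  partition P [set: T] -> inSigma P h ->
  exists phi : {set T} -> {set T},
    [/\ {in P, forall B : {set T}, phi B \in P}, {in P, forall B : {set T}, h @: B \subset phi B} &
        \sum_(B in P) #|phi B| = \sum_(B in P) #|B| ].
Proof.
move=> hP [hT hS].
pose phi (B : {set T}) := if [pick x in B] is Some x then pblock P (h x) else B.
have H1 : {in P, forall B, phi B \in P /\ h @: B \subset phi B}.
  move=> B HB; have [B' HB' s] := hT B HB.
  rewrite /phi; case: pickP => [x xB|]; last first.
    by have [x xB] := nonempty_block _ _ _ hP HB => /(_ x); rewrite xB.
  have hx : h x \in B' by apply: (subsetP s); apply: imset_f.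
  have [bm bx] := block_of _ P (h x) hP.
  by rewrite (same_block _ _ _ _ _ hP bm HB' bx hx).
have EqP : phi @: P = P.
  apply/eqP; rewrite eqEsubset; apply/andP; split.
    by apply/subsetP => _ /imsetP [B HB ->]; case: (H1 B HB).
  apply/subsetP => B' HB'.
  have /set0Pn [y] := hS B' HB'.
  rewrite inE => /andP [/imsetP [x _ ->] hxB'].
  have [bm bx] := block_of _ P x hP.
  have [p1 p2] := H1 _ bm.
  have hx : h x \in phi (pblock P x) by apply: (subsetP p2); apply: imset_f.
  by rewrite -(same_block _ _ _ _ _ hP p1 HB' hx hxB'); apply: imset_f.
have inj : {in P &, injective phi}.
  by apply/imset_injP; rewrite EqP.
exists phi; split.
- by move=> B HB; case: (H1 B HB).
- by move=> B HB; case: (H1 B HB).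
- transitivity (\sum_(B in phi @: P) #|B|); first by rewrite big_imset.
  by rewrite EqP.
Qed.

Lemma gen_inv (T : finType) (P : {set {set T}}) (U : {ffun T -> T} -> Prop) h :
  (forall f, U f -> inSigma P f) -> gen (fun g => inS P g \/ U g) h ->
  (injective h /\ inT P h) \/
  exists g s : {ffun T -> T}, [/\ U g, ~ injective g, injective s, inT P s &
     forall x y, g (s x) = g (s y) -> h x = h y].
Proof.
move=> hU; elim => {h} [f [[fT fb] | Uf] | f1 f2 _ IH1 _ IH2].
- by left; split => //; exact: bij_inj.
- case: (boolP (injectiveb f)) => [/injectiveP fi | /injectiveP fn].
    by left; split => //; case: (hU f Uf).
  right; exists f, [ffun x => x]; split => //.
  + by move=> x y; rewrite !ffunE.
  + move=> B HB; exists B => //; apply/subsetP => _ /imsetP [x xB ->].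
    by rewrite ffunE.
  + by move=> x y; rewrite !ffunE.
- case: IH2 => [[i2 t2] | [g [s [Ug ng si ts hs]]]]; last first.
    right; exists g, s; split => // x y /hs; rewrite !ffunE => ->; done.
  case: IH1 => [[i1 t1] | [g [s [Ug ng si ts hs]]]].
    left; split; last exact: inT_comp.
    by move=> x y; rewrite !ffunE => /i1 /i2.
  right; exists g, (fcomp s f2); split => //.
  + by move=> x y; rewrite !ffunE => /si /i2.
  + exact: inT_comp.
  + by move=> x y; rewrite !ffunE => /hs.
Qed.

Lemma size_in (T : finType) (P : {set {set T}}) B :
  B \in P -> #|B| \in block_sizes P.
Proof.
move=> HB; rewrite /block_sizes mem_sort mem_undup; apply/mapP.
by exists B; rewrite ?mem_enum.
Qed.

Lemma not_size (T : finType) (P : {set {set T}}) k B :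
  k < size (block_sizes P) ->
  (k = 0 /\ nth 0 (block_sizes P) 0 != 1) \/
  (0 < k /\ 2 <= nth 0 (block_sizes P) k - nth 0 (block_sizes P) k.-1) ->
  B \in P -> #|B|.+1 != nth 0 (block_sizes P) k.
Proof.
move=> hk hyp HB; apply/eqP => E.
have mB := size_in _ _ _ HB.
set s := block_sizes P in hk hyp E mB.
have so : sorted leq s by apply: sort_sorted; exact: leq_total.
have mono := sorted_leq_nth leq_trans leqnn 0 so.
have jl : index #|B| s < size s by rewrite index_mem.
have nj := nth_index 0 mB.
case: (leqP k (index #|B| s)) => kj.
  have := mono k (index #|B| s); rewrite !inE => /(_ hk jl kj).
  by rewrite nj -E ltnn.
case: hyp => [[k0 _] | [k0 d]]; first by rewrite k0 in kj.
have := mono (index #|B| s) k.-1; rewrite !inE => /(_ jl).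
have : k.-1 < size s by lia.
move=> h1 /(_ h1); have : index #|B| s <= k.-1 by lia.
move=> h2 /(_ h2); rewrite nj; lia.
Qed.

Theorem lemma4p2 (T : finType) (P : {set {set T}}) (U : {ffun T -> T} -> Prop)
  (k : nat) :
  0 < #|T| ->
  partition P [set: T] ->
  (forall f, U f -> inSigma P f) ->
  (forall f, inSigma P f <-> gen (fun g => inS P g \/ U g) f) ->
  k < size (block_sizes P) ->
  (k = 0 /\ nth 0 (block_sizes P) 0 != 1) \/
  (0 < k /\ 2 <= nth 0 (block_sizes P) k - nth 0 (block_sizes P) k.-1) ->
  exists f, inC P k f /\ U f.
Proof.
move=> _ hP hU hgen hk hyp.
have tI : trivIset P by case/and3P: hP.
set l := nth 0 (block_sizes P) k.
have : l \in block_sizes P by apply: mem_nth.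
rewrite /block_sizes mem_sort mem_undup => /mapP [B0]; rewrite mem_enum => HB0 hl.
have l2 : 1 < l.
  have [x0 x0B] := nonempty_block _ _ _ hP HB0.
  have : 0 < #|B0| by apply/card_gt0P; exists x0.
  rewrite -hl => l0.
  case: hyp => [[k0 n1] | [k0 d]]; last by lia.
  move: n1 l0; rewrite /l k0; lia.
have [a [b [aB bB ab]]] : exists a b, [/\ a \in B0, b \in B0 & a != b].
  by apply/card_gt1P; rewrite -hl.
pose f := [ffun x => if x == b then a else x].
have fblk : forall x, f x \in pblock P x.
  move=> x; rewrite ffunE; case: eqP => [-> | _].
    by rewrite (def_pblock tI HB0 bB).
  by case: (block_of _ P x hP).
have fS : inSigma P f.
  split.
    move=> B HB; exists B => //; apply/subsetP => _ /imsetP [x xB ->].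
    by rewrite -(def_pblock tI HB xB).
  move=> B HB; have [x xB] := nonempty_block _ _ _ hP HB.
  apply/set0Pn; exists (f x); rewrite inE imset_f ?inE //=.
  by rewrite -(def_pblock tI HB xB).
have fcol : forall x y, f x = f y -> x = y \/ (x = a /\ y = b) \/ (x = b /\ y = a).
  move=> x y; rewrite !ffunE.
  case: (eqVneq x b) => [-> | xb]; case: (eqVneq y b) => [-> | yb]; auto.
case: (gen_inv _ _ _ _ hU ((hgen f).1 fS)) => [[fi _] | [g [s [Ug ng si ts hs]]]].
  by have := fi a b; rewrite !ffunE eqxx (negbTE ab) => /(_ erefl) e; rewrite e eqxx in ab.
have [sinv sK Ks] := injF_bij si.
have [u [v [guv uv]]] : exists u v, g u = g v /\ u <> v.
  case: (boolP [exists u, exists v, (g u == g v) && (u != v)]).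
    by case/existsP => u /existsP [v /andP [/eqP e /eqP n]]; exists u, v.
  move=> H; exfalso; apply: ng => u v e; apply/eqP; apply: contraNT H => n.
  by apply/existsP; exists u; apply/existsP; exists v; rewrite e eqxx.
have sab : s a != s b by apply: contra ab => /eqP /si ->.
have gab : g (s a) = g (s b).
  have : f (sinv u) = f (sinv v) by apply: hs; rewrite !Ks.
  case/fcol => [e | [[ea eb] | [ea eb]]].
  - by exfalso; apply: uv; rewrite -(Ks u) -(Ks v) e.
  - by rewrite -ea -eb !Ks.
  - by rewrite -ea -eb !Ks.
have gcol : forall p q, g p = g q -> p = q \/ (p = s a /\ q = s b) \/ (p = s b /\ q = s a).
  move=> p q e.
  have : f (sinv p) = f (sinv q) by apply: hs; rewrite !Ks.
  case/fcol => [e' | [[ea eb] | [ea eb]]].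
  - by left; rewrite -(Ks p) -(Ks q) e'.
  - by right; left; rewrite -ea -eb !Ks.
  - by right; right; rewrite -ea -eb !Ks.
have sS : inSigma P s.
  split => // B HB; have [x xB] := nonempty_block _ _ _ hP HB.
  apply/set0Pn; exists x; rewrite inE xB andbT -{1}(Ks x); exact: imset_f.
have [ps [ps1 ps2 ps3]] := blockmap _ _ _ hP sS.
have psE : {in P, forall B : {set T}, #|B| = #|ps B|}.
  apply: sum_eq_le => //= B HB.
  rewrite -(card_imset (mem B) si); exact: subset_leq_card (ps2 B HB).
set C0 := ps B0.
have HC0 : C0 \in P by apply: ps1.
have cC0 : #|C0| = l by rewrite hl -psE.
have saC : s a \in C0 by apply: (subsetP (ps2 _ HB0)); apply: imset_f.
have sbC : s b \in C0 by apply: (subsetP (ps2 _ HB0)); apply: imset_f.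
have gS := hU g Ug.
have [pg [pg1 pg2 pg3]] := blockmap _ _ _ hP gS.
have ginj : forall B, B \in P -> B != C0 -> {in B &, injective g}.
  move=> B HB nB p q pB qB /gcol [// | [[ep _] | [ep _]]].
  - by rewrite (same_block _ _ _ _ _ hP HB HC0 pB) ?eqxx in nB; rewrite ep.
  - by rewrite (same_block _ _ _ _ _ hP HB HC0 pB) ?eqxx in nB; rewrite ep.
have gC0 : #|g @: C0| = l.-1.
  have -> : g @: C0 = g @: (C0 :\ s b).
    apply/eqP; rewrite eqEsubset; apply/andP; split; last by apply: imsetS; apply: subsetDl.
    apply/subsetP => _ /imsetP [z zC ->].
    case: (eqVneq z (s b)) => [zb | zb].
      by rewrite zb -gab; apply: imset_f; rewrite !inE saC andbT; first [exact: sab | rewrite eq_sym; exact: sab].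
    by apply: imset_f; rewrite !inE zb.
  rewrite card_in_imset; last first.
    move=> p q; rewrite !inE => /andP [pb _] /andP [qb _].
    case/gcol => [// | [[_ eq] | [ep _]]]; first by rewrite eq eqxx in qb.
    by rewrite ep eqxx in pb.
  by move: (cardsD1 (s b) C0); rewrite sbC cC0 => ->.
have pgE : {in P, forall B : {set T}, #|B| = #|pg B|}.
  apply: sum_eq_le => //= B HB.
  case: (eqVneq B C0) => [-> | nB].
    have h1 := subset_leq_card (pg2 C0 HC0).
    have h2 := not_size _ _ _ _ hk hyp (pg1 C0 HC0).
    rewrite gC0 -/l in h1 h2; rewrite cC0; lia.
  rewrite -(card_in_imset (ginj B HB nB)); exact: subset_leq_card (pg2 B HB).
exists g; split => //; split => //.
  by move=> B HB; exists (pg B); [apply: pg1 | split; [rewrite -pgE | apply: pg2]].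
exists C0 => //; split => //.
Qed.
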